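(* Under the dual metric loss, no algorithm that always produces a balanced clustering can achieve the $\alpha$-core for any $\alpha\ge1$; that is, for every $\alpha\ge1$ there exists a dual-metric-loss instance in which $k$ divides $n$ and no balanced clustering is in the $\alpha$-core.
   Context: Instance with dual metric loss: finite nonempty set $\mathcal{N}$ of $n$ agents, finite nonempty set $\mathcal{M}$ of feasible centers, positive integer $k$, pseudometric $d^m$ on $\mathcal{N}$, pseudometric $d^c$ on $\mathcal{N}\cup\mathcal{M}$; $\ell_i(C,x)=\max_{j\in C}d^m(i,j)+d^c(i,x)$ for $i\in C\subseteq\mathcal{N}$, $x\in\mathcal{M}$. A clustering is $\mathcal{X}=\{(C_1,x_1),\dots,(C_k,x_k)\}$ with $C_t$ pairwise disjoint (some possibly empty), union $\mathcal{N}$, $x_t\in\mathcal{M}$; $\ell_i(\mathcal{X})=\ell_i(C_t,x_t)$ where $i\in C_t$. It is balanced if, whenever $k$ divides $n$, $|C_t|=n/k$ for all $t$. For $\alpha\ge1$, $\mathcal{X}$ is in the $\alpha$-core if there is no $S\subseteq\mathcal{N}$ with $|S|\ge n/k$ and $y\in\mathcal{M}$ with $\alpha\,\ell_i(S,y)<\ell_i(\mathcal{X})$ for all $i\in S$. *)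

(* Defs.v *)
From mathcomp Require Import all_boot all_order all_algebra.
From mathcomp Require Import reals.
Set Implicit Arguments. Unset Strict Implicit. Unset Printing Implicit Defensive.
Import Order.TTheory GRing.Theory Num.Theory.
Local Open Scope ring_scope.

Definition pseudometric (R : realType) (T : Type) (d : T -> T -> R) : Prop :=
  [/\ forall x, d x x = 0,
      forall x y, d x y = d y x
    & forall x y z, d x z <= d x y + d y z].

(* Dual metric loss l_i(C, x) = max_{j in C} d^m(i,j) + d^c(i,x).
   The max is taken with default 0 (harmless: i \in C and d^m >= 0). *)
Definition dual_loss (R : realType) (N M : finType)
  (dm : N -> N -> R) (dc : (N + M)%type -> (N + M)%type -> R)
  (i : N) (C : {set N}) (x : M) : R :=
  \big[Order.max/0]_(j in C) dm i j + dc (inl i) (inr x).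

(* A clustering with k (possibly empty) clusters: cluster t is (clC t, clx t). *)
Record clustering (N M : finType) (k : nat) := Clustering {
  clC : 'I_k -> {set N};
  clx : 'I_k -> M }.

Definition is_clustering (N M : finType) (k : nat) (X : clustering N M k) : Prop :=
  (forall t u : 'I_k, t != u -> [disjoint clC X t & clC X u]) /\
  (\bigcup_(t < k) clC X t = [set: N]).

Definition balanced (N M : finType) (k : nat) (X : clustering N M k) : Prop :=
  (k %| #|N|)%N -> forall t : 'I_k, #|clC X t| = (#|N| %/ k)%N.

Definition in_alpha_core (R : realType) (N M : finType) (k : nat)
  (dm : N -> N -> R) (dc : (N + M)%type -> (N + M)%type -> R)
  (alpha : R) (X : clustering N M k) : Prop :=
  ~ exists (S : {set N}) (y : M),
      (#|N|%:R / k%:R <= #|S|%:R :> R) /\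
      forall i, i \in S -> forall t : 'I_k, i \in clC X t ->
        alpha * dual_loss dm dc i S y < dual_loss dm dc i (clC X t) (clx X t).

(* Main.v *)
Require Import Defs.
From mathcomp Require Import all_boot all_order all_algebra.
From mathcomp Require Import reals.
From mathcomp Require Import lra.
Import Order.TTheory GRing.Theory Num.Theory.
Local Open Scope ring_scope.

Definition dmX (R : realType) (H : R) (i j : 'I_4) : R :=
  if (nat_of_ord i == 3)%N == (nat_of_ord j == 3)%N then 0 else H.

Definition locX (u : ('I_4 + 'I_3)%type) : nat :=
  match u with inl i => if (nat_of_ord i == 3)%N then 0%N else nat_of_ord i
             | inr m => nat_of_ord m end.

Definition dcX (R : realType) (u v : ('I_4 + 'I_3)%type) : R :=
  if locX u == locX v then 0 else 1.

Lemma exists_i (p : 'I_4) (x : 'I_3) : (nat_of_ord p != 3)%N ->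
  exists i : 'I_4, [/\ i != p, (nat_of_ord i != 3)%N & (nat_of_ord i != x)%N].
Proof.
case: p => [[|[|[|[|?]]]] Hp] //= _; case: x => [[|[|[|?]]] Hx] //=;
  by [exists (@Ordinal 4 0 isT) | exists (@Ordinal 4 1 isT) | exists (@Ordinal 4 2 isT)].
Qed.



Lemma other2 (t3 : 'I_2) : exists t' : 'I_2, t' != t3 /\ forall t, t = t3 \/ t = t'.
Proof.
case: t3 => [[|[|?]] H3] //.
- exists (@Ordinal 2 1 isT); split => //.
  case=> [[|[|?]] Ht] //; [left | right]; exact: val_inj.
- exists (@Ordinal 2 0 isT); split => //.
  case=> [[|[|?]] Ht] //; [right | left]; exact: val_inj.
Qed.

Theorem mainTheorem17 (R : realType) (alpha : R) :
  1 <= alpha ->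
  exists (N M : finType) (k : nat) (dm : N -> N -> R)
         (dc : (N + M)%type -> (N + M)%type -> R),
    [/\ (0 < #|N|)%N, (0 < #|M|)%N, (0 < k)%N & (k %| #|N|)%N] /\
    pseudometric dm /\ pseudometric dc /\
    forall X : clustering N M k,
      is_clustering X -> balanced X -> ~ in_alpha_core dm dc alpha X.
Proof.
move=> ha.
exists 'I_4, 'I_3, 2%N, (@dmX R (alpha + 1)), (@dcX R).
split; first by rewrite !card_ord.
split.
  split => [x|x y|x y z]; rewrite /dmX ?eqxx // 1?eq_sym //.
  case: (nat_of_ord x == 3)%N; case: (nat_of_ord y == 3)%N;
    case: (nat_of_ord z == 3)%N => /=; lra.
split.
  split => [x|x y|x y z]; rewrite /dcX ?eqxx // 1?eq_sym //.
  case: eqP => e1; case: eqP => e2; case: eqP => e3 //; try lra.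
  exfalso; congruence.
move=> X [Hdis Hcov] Hbal Hcore; apply: Hcore.
have Hcard t : #|clC X t| = 2%N by rewrite Hbal ?card_ord.
pose three : 'I_4 := @Ordinal 4 3 isT.
have : three \in \bigcup_(t < 2) clC X t by rewrite Hcov inE.
case/bigcupP => t3 _ H3.
have /eqP/cards2P [a [b [ab Ct3]]] := Hcard t3.
have [p [Hp3 Ct3']] : exists p : 'I_4, (nat_of_ord p != 3)%N /\ clC X t3 = [set three; p].
  move: H3; rewrite Ct3 !inE => /orP [/eqP ea | /eqP eb].
  - exists b; split; last by rewrite ea.
    apply: contra ab => /eqP e; apply/eqP/val_inj; by rewrite /= -ea e.
  - exists a; split; last by apply/setP => z; rewrite eb !inE orbC.
    apply: contra ab => /eqP e; apply/eqP/val_inj; by rewrite /= -eb e.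
have [t' [t't3 Hall]] := other2 t3.
have [i [ip i3 ix]] := exists_i p (clx X t') Hp3.
have iNt3 : i \notin clC X t3.
  by rewrite Ct3' !inE (negbTE ip) orbF -val_eqE /= (negbTE i3).
have pt3 : p \in clC X t3 by rewrite Ct3' !inE eqxx orbT.
have Hti t : i \in clC X t -> t = t'.
  by move=> Hi; case: (Hall t) => // e; move: Hi; rewrite e (negbTE iNt3).
have Htp t : p \in clC X t -> t = t3.
  move=> Hp; case: (eqVneq t t3) => // ne.
  by rewrite (disjointFr (Hdis _ _ ne) Hp) in pt3.
have Hi3 : (i < 3)%N.
  by have := ltn_ord i; rewrite ltnS leq_eqVlt (negbTE i3).
pose y : 'I_3 := Ordinal Hi3.
have locp : locX (inl p) = nat_of_ord p by rewrite /= (negbTE Hp3).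
have loci : locX (inl i) = nat_of_ord i by rewrite /= (negbTE i3).
have big0 j : j \in [set i; p] ->
    \big[Order.max/0]_(l in [set i; p]) @dmX R (alpha + 1) j l = 0.
  move=> Hj; apply: bigmax_eq_id => l Hl.
  move: Hj Hl; rewrite !inE => /orP [/eqP -> | /eqP ->] /orP [/eqP -> | /eqP ->];
    by rewrite /dmX ?(negbTE i3) ?(negbTE Hp3).
exists [set i; p], y; split.
  rewrite card_ord cards2 ip /=; lra.
move=> j Hj t Ht; rewrite /dual_loss big0 //.
move: Hj Ht; rewrite !inE => /orP [/eqP -> | /eqP ->] Ht.
- rewrite (Hti t Ht) /dcX loci /= eqxx (negbTE ix).
  have := bigmax_ge_id (index_enum 'I_4) 0 (fun l => l \in clC X t')
            (@dmX R (alpha + 1) i).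
  lra.
- have pi : (nat_of_ord p == nat_of_ord i) = false.
    by apply/eqP => e; move/eqP: ip; apply; apply: val_inj; exact: (esym e).
  rewrite (Htp t Ht) /dcX locp /= pi -/three.
  have H01 : 0 <= (if nat_of_ord p == nat_of_ord (clx X t3) then 0 else 1 : R).
    by case: ifP => _; lra.
  have := @le_bigmax_cond _ R 'I_4 0 three (fun l => l \in clC X t3)
            (@dmX R (alpha + 1) p) H3.
  rewrite /dmX /= (negbTE Hp3) /=.
  have := bigmax_ge_id (index_enum 'I_4) 0 (fun l => l \in clC X t3)
            (@dmX R (alpha + 1) p).
  move=> _; set M := \big[_/_]_(_ in _) _ => B; case: ifP => _; rewrite add0r mulr1 ?addr0; clearbody M; lra.
Qed.
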